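(* Let $\mathcal{G}_{\curlywedge}=(G,o,\curlywedge,R_1,\ldots,R_n)$ be a functional Menger $\curlywedge$-algebra of rank $n$ and let $H$ be a nonempty subset of $G$. Then $H$ is a stabilizer of $\mathcal{G}_{\curlywedge}$ if and only if: (1) $H$ is quasi-stable, $\curlywedge$-stable and $v$-unitary; (2) there exists a subset $U\subseteq G$ with $H\subseteq U$, $R_iU\subseteq H$ and $R_i(G\setminus U)\subseteq G\setminus U$ for every $i\in\{1,\ldots,n\}$, such that (3) for all $x,y\in G$: if $x\in U$ and $y\in H$ then $y[R_1x\ldots R_nx]\in H$; and if $x\in U$ and $y\in U$ then $y[R_1x\ldots R_nx]\in U$.
   Context: A functional Menger system of rank $n$ is a nonempty set $G$ with an $(n+1)$-ary operation $o\colon(x_0,x_1,\ldots,x_n)\mapsto x_0[x_1\ldots x_n]$ and unary operations $R_1,\ldots,R_n$ satisfying, for all $i,k\in\{1,\ldots,n\}$ and all elements: (A1) $x[y_1\ldots y_n][z_1\ldots z_n]=x[y_1[z_1\ldots z_n]\ldots y_n[z_1\ldots z_n]]$; (A2) $x[R_1x\ldots R_nx]=x$; (A3) $x[\bar u\,|_iz][R_1y\ldots R_ny]=x[\bar u\,|_iz[R_1y\ldots R_ny]]$; (A4) $R_ix[R_1y\ldots R_ny]=(R_ix)[R_1y\ldots R_ny]$; (A5) $x[R_1y\ldots R_ny][R_1z\ldots R_nz]=x[R_1z\ldots R_nz][R_1y\ldots R_ny]$; (A6) $R_ix[y_1\ldots y_n]=R_i(R_kx)[y_1\ldots y_n]$;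 (A7) $(R_ix)[y_1\ldots y_n]=y_i[R_1(x[y_1\ldots y_n])\ldots R_n(x[y_1\ldots y_n])]$. Here $x[\bar u\,|_iz]$ denotes $x[u_1\ldots u_{i-1}\,z\,u_{i+1}\ldots u_n]$, and $R_ix[\ldots]$ means $R_i(x[\ldots])$. A functional Menger $\curlywedge$-algebra of rank $n$ is an algebra $(G,o,\curlywedge,R_1,\ldots,R_n)$ such that $(G,o,R_1,\ldots,R_n)$ is a functional Menger system of rank $n$, $(G,\curlywedge)$ is a semilattice, and (A8) $x\curlywedge y[R_1z\ldots R_nz]=(x\curlywedge y)[R_1z\ldots R_nz]$; (A9) $x\curlywedge y=x[R_1(x\curlywedge y)\ldots R_n(x\curlywedge y)]$; (A10) $(x\curlywedge y)[z_1\ldots z_n]=x[z_1\ldots z_n]\curlywedge y[z_1\ldots z_n]$. For a set $A$, $\mathcal F(A^n,A)$ is the set of partial maps $A^n\to A$ (viewed as subsets of $A^n\times A$). The Menger composition $f[g_1\ldots g_n]$ is the partial function $\bar a\mapsto f(g_1(\bar a),\ldots,g_n(\bar a))$ (defined exactly when the right side is defined), and $\mathcal R_if$ is the partial function with the same domain as $f$ given by $(a_1,\ldots,a_n)\mapsto a_i$. A representation of $\mathcal G_\curlywedge$ by $n$-place functions on a set $A$ is a map $P\colon G\to\mathcal F(A^n,A)$ with $P(x[y_1\ldots y_n])=P(x)[P(y_1)\ldots P(y_n)]$, $P(R_ix)=\mathcal R_iP(x)$ and $P(x\curlywedge y)=P(x)\cap P(y)$ (set-theoretic intersection). A nonempty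 $H\subseteq G$ is a stabilizer of $\mathcal G_\curlywedge$ if there exist such a representation $P$ on some set $A$ and a point $a\in A$ with $H=\{g\in G: P(g)(a,\ldots,a)=a\}$. A nonempty $H\subseteq G$ is quasi-stable if $x\in H\Rightarrow x[x\ldots x]\in H$; $\curlywedge$-stable if $x,y\in H\Rightarrow x\curlywedge y\in H$; $v$-unitary if $x[y_1\ldots y_n]\in H$ and $y_1,\ldots,y_n\in H$ imply $x\in H$. *)

(* Defs.v *)
(* 'I_n is the index set {1..n} (shifted to {0..n-1}). *)
From mathcomp Require Import all_boot.
Set Implicit Arguments. Unset Strict Implicit. Unset Printing Implicit Defensive.

Section Menger.
Variables (G : Type) (n : nat).
Variable o : G -> ('I_n -> G) -> G.          (* o x ys = x[ys_1 ... ys_n] *)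
Variable meet : G -> G -> G.
Variable R : 'I_n -> G -> G.

Definition Rv (y : G) : 'I_n -> G := fun i => R i y.

Definition upd (u : 'I_n -> G) (i : 'I_n) (z : G) : 'I_n -> G :=
  fun j => if j == i then z else u j.

Definition functional_Menger_system : Prop :=
  (forall x y z, o (o x y) z = o x (fun i => o (y i) z)) /\
  (forall x, o x (Rv x) = x) /\
  (forall x u z y i,
     o (o x (upd u i z)) (Rv y) = o x (upd u i (o z (Rv y)))) /\
  (forall i x y, R i (o x (Rv y)) = o (R i x) (Rv y)) /\
  (forall x y z, o (o x (Rv y)) (Rv z) = o (o x (Rv z)) (Rv y)) /\
  (forall i k x y, R i (o x y) = R i (o (R k x) y)) /\
  (forall i x y, o (R i x) y = o (y i) (Rv (o x y))).

Definition semilattice : Prop :=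
  [/\ (forall x y z, meet x (meet y z) = meet (meet x y) z),
      (forall x y, meet x y = meet y x)
    & (forall x, meet x x = x)].

Definition functional_Menger_meet_algebra : Prop :=
  [/\ functional_Menger_system,
      semilattice,
      (forall x y z, meet x (o y (Rv z)) = o (meet x y) (Rv z)),
      (forall x y, meet x y = o x (Rv (meet x y)))
    & (forall x y z, o (meet x y) z = meet (o x z) (o y z))].

(* Partial n-place functions on A are maps A^n -> option A; their graphs are
   the subsets of A^n x A of the paper.  The conditions below state equality
   of graphs (as subsets of A^n x A). *)
Definition is_representation (A : Type) (P : G -> ('I_n -> A) -> option A) : Prop :=
  [/\ (forall x ys (a : 'I_n -> A) (b : A),
         P (o x ys) a = Some b <->
         exists c : 'I_n -> A, (forall i, P (ys i) a = Some (c i)) /\ P x c = Some b),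
      (forall i x (a : 'I_n -> A) (b : A),
         P (R i x) a = Some b <-> (exists c, P x a = Some c) /\ b = a i)
    & (forall x y (a : 'I_n -> A) (b : A),
         P (meet x y) a = Some b <-> P x a = Some b /\ P y a = Some b)].

Definition stabilizer (H : G -> Prop) : Prop :=
  exists (A : Type) (P : G -> ('I_n -> A) -> option A) (a : A),
    is_representation P /\ (forall g, H g <-> P g (fun _ => a) = Some a).

Definition quasi_stable (H : G -> Prop) : Prop :=
  forall x, H x -> H (o x (fun _ => x)).

Definition meet_stable (H : G -> Prop) : Prop :=
  forall x y, H x -> H y -> H (meet x y).

Definition v_unitary (H : G -> Prop) : Prop :=
  forall x ys, H (o x ys) -> (forall i, H (ys i)) -> H x.

End Menger.

(* Main.v *)
Require Import Defs.
From mathcomp Require Import all_boot.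
From mathcomp Require Import zify.
From Stdlib Require Import Classical ClassicalEpsilon FunctionalExtensionality PropExtensionality.

Set Implicit Arguments. Unset Strict Implicit. Unset Printing Implicit Defensive.

Section Forward.
Variables (G : Type) (n : nat) (o : G -> ('I_n -> G) -> G) (meet : G -> G -> G)
  (R : 'I_n -> G -> G) (H : G -> Prop).

Lemma forward : stabilizer o meet R H ->
  ((quasi_stable o H /\ meet_stable meet H /\ v_unitary o H) /\
   exists U : G -> Prop,
     (forall x, H x -> U x) /\
     (forall i x, U x -> H (R i x)) /\
     (forall i x, ~ U x -> ~ U (R i x)) /\
     (forall x y, U x -> H y -> H (o y (Rv R x))) /\
     (forall x y, U x -> U y -> U (o y (Rv R x)))).
Proof.
move=> [A [P [a [[hc hR hm] hHP]]]].
set aa : 'I_n -> A := fun _ => a.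
have hRa : forall i x b, P x aa = Some b -> P (R i x) aa = Some a.
  by move=> i x b hb; apply/hR; split; [exists b|].
split; [split; [|split]|].
- move=> x /hHP hx; apply/hHP/hc; exists aa; split => //.
- by move=> x y /hHP hx /hHP hy; apply/hHP/hm.
- move=> x ys /hHP /hc [c [hc1 hc2]] hys; apply/hHP.
  have E : aa = c.
    apply: functional_extensionality => i.
    have := hys i => /hHP; rewrite hc1; by case.
  by rewrite -E in hc2.
exists (fun x => exists b, P x aa = Some b).
split; [|split; [|split; [|split]]].
- by move=> x /hHP hx; exists a.
- by move=> i x [b hb]; apply/hHP; apply: hRa hb.
- move=> i x hn [b /hR [[c hc'] _]]; apply: hn; by exists c.
- move=> x y [b hb] /hHP hy; apply/hHP/hc; exists aa; split => // i.
  exact: hRa hb.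
- move=> x y [b hb] [b' hb']; exists b'; apply/hc; exists aa; split => // i.
  exact: hRa hb.
Qed.
End Forward.

Section Backward.
Variables (G : Type) (n : nat) (o : G -> ('I_n -> G) -> G) (meet : G -> G -> G)
  (R : 'I_n -> G -> G) (H U : G -> Prop).
Hypothesis hn : 0 < n.
Hypothesis A1 : forall x y z, o (o x y) z = o x (fun i => o (y i) z).
Hypothesis A3 : forall x u z y i,
     o (o x (upd u i z)) (Rv R y) = o x (upd u i (o z (Rv R y))).
Hypothesis A4 : forall i x y, R i (o x (Rv R y)) = o (R i x) (Rv R y).
Hypothesis A6 : forall i k x y, R i (o x y) = R i (o (R k x) y).
Hypothesis A7 : forall i x y, o (R i x) y = o (y i) (Rv R (o x y)).
Hypothesis SLA : forall x y z, meet x (meet y z) = meet (meet x y) z.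
Hypothesis SLC : forall x y, meet x y = meet y x.
Hypothesis SLI : forall x, meet x x = x.
Hypothesis A8 : forall x y z, meet x (o y (Rv R z)) = o (meet x y) (Rv R z).
Hypothesis A9 : forall x y, meet x y = o x (Rv R (meet x y)).
Hypothesis A10 : forall x y z, o (meet x y) z = meet (o x z) (o y z).
Hypothesis Hqs : quasi_stable o H.
Hypothesis Hms : meet_stable meet H.
Hypothesis Hvu : v_unitary o H.
Hypothesis HU : forall x, H x -> U x.
Hypothesis RH : forall i x, U x -> H (R i x).
Hypothesis RU : forall i x, ~ U x -> ~ U (R i x).
Hypothesis C1 : forall x y, U x -> H y -> H (o y (Rv R x)).
Hypothesis C2 : forall x y, U x -> U y -> U (o y (Rv R x)).

Let i0 : 'I_n := Ordinal hn.

Lemma UR_inv k v : U (R k v) -> U v.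
Proof. move=> h; apply: NNPP => nu; exact: (RU nu h). Qed.

Lemma L1 x y : U x -> U (o y (Rv R x)) -> U y.
Proof.
move=> ux uy; apply: (@UR_inv i0); apply: HU.
apply: (@Hvu _ (Rv R x)); last by move=> j; exact: RH.
rewrite -A4; exact: RH.
Qed.

Lemma L4 x y : U (meet x y) -> U x.
Proof. move=> h; apply: (L1 h); by rewrite -A9. Qed.

Lemma L3 x w j : U (o x w) -> U (w j).
Proof.
move=> h; apply: (L1 h); rewrite -A7; apply: (@UR_inv i0).
rewrite -A6; apply: HU; exact: RH.
Qed.

Lemma Utr x y z : U (meet x y) -> U (meet y z) -> U (meet x z).
Proof.
move=> hu hv; set u := meet x y.
have e1 : o x (Rv R u) = u by rewrite /u -A9.
have e2 : o y (Rv R u) = u by rewrite /u (SLC x y) -A9.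
have e : o (meet x z) (Rv R u) = o (meet y z) (Rv R u).
  by rewrite (SLC x z) -A8 e1 -{1}e2 A8 (SLC z y).
apply: (L1 hu); rewrite e; exact: C2.
Qed.

Lemma L5 p q : H (meet p q) -> H p.
Proof.
move=> h; apply: (@Hvu _ (Rv R (meet p q))); first by rewrite -A9.
move=> j; apply: RH; exact: HU.
Qed.

Definition cls (z : G) : G -> Prop := fun w => U (meet z w).

Lemma cls_eq a b : U (meet a b) -> cls a = cls b.
Proof.
move=> h; apply: functional_extensionality => w; apply: propositional_extensionality.
rewrite /cls; split => hw.
- apply: (@Utr _ a) => //; by rewrite SLC.
- exact: (@Utr _ b).
Qed.

Lemma cls_rel a b : U a -> cls a = cls b -> U (meet a b).
Proof.
move=> ua E; have : cls a a by rewrite /cls SLI.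
by rewrite E /cls SLC.
Qed.

Lemma HclassH h x : H h -> (U (meet x h) <-> H x).
Proof.
move=> hh; split => hx; last by apply: HU; exact: Hms.
have : H (meet h x).
  rewrite A9; apply: C1 => //; by rewrite SLC.
rewrite SLC; exact: L5.
Qed.

Definition tt (s m : 'I_n -> G) (k : nat) : 'I_n -> G :=
  fun i => if i < k then m i else s i.

Lemma tt0 s m : tt s m 0 = s.
Proof. by apply: functional_extensionality => i. Qed.

Lemma ttn s m : tt s m n = m.
Proof. by apply: functional_extensionality => i; rewrite /tt ltn_ord. Qed.

Lemma step x (s m : 'I_n -> G) (hm : forall j, o (s j) (Rv R (m j)) = m j)
   k (hk : k < n) :
  o x (tt s m k.+1) = o (o x (tt s m k)) (Rv R (m (Ordinal hk))).
Proof.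
set j := Ordinal hk.
have E : tt s m k = upd (tt s m k) j (s j).
  apply: functional_extensionality => i; rewrite /upd /tt.
  case: eqP => [->|] //=; by rewrite ltnn.
rewrite E A3 hm; congr (o x _).
apply: functional_extensionality => i; rewrite /upd /tt.
case: eqP => [->|ne] /=; first by rewrite ltnSn.
have hne : (nat_of_ord i != k).
  apply/eqP => h; apply: ne; exact: val_inj.
by rewrite ltnS leq_eqVlt (negbTE hne).
Qed.

Lemma up (Q : nat -> Prop) : Q 0 -> (forall k, k < n -> Q k -> Q k.+1) -> Q n.
Proof.
move=> h0 hs; suff : forall k, k <= n -> Q k by apply.
elim => // k IH hk; apply: hs => //; apply: IH; exact: ltnW.
Qed.

Lemma down (Q : nat -> Prop) : Q n -> (forall k, k < n -> Q k.+1 -> Q k) -> Q 0.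
Proof.
move=> hn0 hs; suff : forall d, d <= n -> Q (n - d).
  by move=> h; have := h n (leqnn n); rewrite subnn.
elim => [|d IH] hd; first by rewrite subn0.
have e : (n - d.+1).+1 = n - d by lia.
apply: hs; first lia.
rewrite e; apply: IH; exact: ltnW.
Qed.

Lemma WD x w v : (forall i, U (meet (w i) (v i))) -> U (o x w) ->
  U (meet (o x w) (o x v)).
Proof.
move=> hwv hx; set m := fun i => meet (w i) (v i).
have hmw : forall j, o (w j) (Rv R (m j)) = m j by move=> j; rewrite /m -A9.
have hmv : forall j, o (v j) (Rv R (m j)) = m j.
  by move=> j; rewrite /m (SLC (w j)) -A9.
have Um : U (o x m).
  rewrite -(ttn w m); apply: (@up (fun k => U (o x (tt w m k)))) => [|k hk hq]; first by rewrite tt0.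
  rewrite (step _ hmw hk); apply: C2 => //; exact: hwv.
rewrite -(tt0 w m) -(tt0 v m).
apply: (@down (fun k => U (meet (o x (tt w m k)) (o x (tt v m k))))).
  by rewrite !ttn SLI.
move=> k hk; rewrite (step _ hmw hk) (step _ hmv hk).
set P := o x (tt w m k); set Q := o x (tt v m k); set mj := m _.
have umj : U mj by apply: hwv.
rewrite A8 => h1; have h2 := L1 umj h1.
rewrite SLC A8 in h2; have h3 := L1 umj h2; by rewrite SLC.
Qed.


Variable inh : inhabited G.

Definition valid (c : G -> Prop) := exists z, U z /\ c = cls z.
Definition rep (c : G -> Prop) : G := epsilon inh (fun z => U z /\ c = cls z).

Lemma rep_spec c : valid c -> U (rep c) /\ c = cls (rep c).
Proof. move=> h; exact: (epsilon_spec inh (fun z => U z /\ c = cls z) h). Qed.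

Definition PP (g : G) (c : 'I_n -> G -> Prop) : option (G -> Prop) :=
  if excluded_middle_informative
       ((forall i, valid (c i)) /\ U (o g (fun i => rep (c i))))
  then Some (cls (o g (fun i => rep (c i)))) else None.

Lemma PP_some g c b : PP g c = Some b <->
  (forall i, valid (c i)) /\ U (o g (fun i => rep (c i))) /\
  b = cls (o g (fun i => rep (c i))).
Proof.
rewrite /PP; case: excluded_middle_informative => [[h1 h2]|hn'].
  by split; [case => <-|move=> [_ [_ ->]]].
split => //; move=> [h1 [h2 _]]; by case: hn'.
Qed.

Lemma WD' x w v : (forall i, U (w i)) -> (forall i, cls (w i) = cls (v i)) ->
  U (o x w) -> U (o x v) /\ cls (o x w) = cls (o x v).
Proof.
move=> uw e hx.
have h := WD (fun i => cls_rel (uw i) (e i)) hx.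
split; last exact: cls_eq.
by move: h; rewrite SLC; apply: L4.
Qed.

Lemma cls_res z u : U u -> U z -> cls (o z (Rv R u)) = cls z.
Proof.
move=> uu uz; apply: cls_eq; rewrite SLC A8 SLI; exact: C2.
Qed.

Lemma repr_ok : is_representation o meet R PP.
Proof.
split.
- move=> x ys c b; split.
  + move=> /PP_some [hv [hu ->]].
    set zc := fun i => rep (c i).
    rewrite A1 in hu *.
    exists (fun i => cls (o (ys i) zc)); split.
      move=> i; apply/PP_some; split => //; split => //.
      by apply: (@L3 x (fun i => o (ys i) zc) i hu).
    apply/PP_some.
    have hvd : forall i, valid (cls (o (ys i) zc)).
      move=> i; exists (o (ys i) zc); split => //.
      exact: (@L3 x (fun i => o (ys i) zc) i hu).
    split => //.
    have [h1 h2] := WD' (x := x) (w := fun i => o (ys i) zc)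
                        (v := fun i => rep (cls (o (ys i) zc)))
                        (fun i => @L3 x (fun i => o (ys i) zc) i hu)
                        (fun i => (rep_spec (hvd i)).2) hu.
    by split.
  + move=> [d [hd /PP_some [hvd [hu ->]]]].
    have := hd i0 => /PP_some [hvc _].
    set zc := fun i => rep (c i).
    have hys : forall i, U (o (ys i) zc) /\ d i = cls (o (ys i) zc).
      by move=> i; have := hd i => /PP_some [_ [h1 h2]].
    have [h1 h2] := WD' (x := x) (w := fun i => rep (d i))
                        (v := fun i => o (ys i) zc)
                        (fun i => (rep_spec (hvd i)).1)
                        (fun i => etrans (esym (rep_spec (hvd i)).2) (hys i).2) hu.
    apply/PP_some; split => //; rewrite A1; by split.
- move=> i x c b; split.
  + move=> /PP_some [hv [hu ->]].
    set zc := fun i => rep (c i).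
    have hx : U (o x zc).
      apply: (@UR_inv i0); rewrite (A6 i0 i); apply: HU; exact: RH.
    split; first by exists (cls (o x zc)); apply/PP_some.
    rewrite A7 cls_res //; first by rewrite -(rep_spec (hv i)).2.
    exact: (rep_spec (hv i)).1.
  + move=> [[e /PP_some [hv [hu _]]] ->].
    set zc := fun i => rep (c i).
    have uz : U (zc i) by exact: (rep_spec (hv i)).1.
    apply/PP_some; split => //; rewrite A7; split; first exact: C2.
    rewrite cls_res //; exact: (rep_spec (hv i)).2.
- move=> x y c b; split.
  + move=> /PP_some [hv [hu ->]].
    set zc := fun i => rep (c i).
    rewrite A10 in hu *.
    have up : U (o x zc) by exact: L4 hu.
    have uq : U (o y zc) by move: hu; rewrite SLC; apply: L4.
    set p := o x zc in hu up *; set q := o y zc in hu uq *.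
    split; apply/PP_some; split => //; split => //; apply: cls_eq.
      by rewrite (SLC (meet p q) p) SLA SLI.
    by rewrite -SLA SLI.
  + move=> [/PP_some [hv [hu ->]] /PP_some [_ [hu' e]]].
    set zc := fun i => rep (c i).
    have hm : U (meet (o x zc) (o y zc)) by apply: cls_rel.
    apply/PP_some; split => //; rewrite A10; split => //.
    apply: cls_eq; by rewrite SLA SLI.
Qed.

Lemma stab_ok h0 : H h0 -> stabilizer o meet R H.
Proof.
move=> hh0; exists (G -> Prop), PP, (cls h0); split; first exact: repr_ok.
have va : valid (cls h0) by exists h0; split => //; exact: HU.
have [uz0 ez0] := rep_spec va.
set z0 := rep (cls h0) in uz0 ez0 *.
have hz0 : H z0 by apply/(HclassH _ hh0)/cls_rel => //.
move=> g; split => [hg|].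
- set m := meet g z0.
  have hm : H m by exact: Hms.
  have hmm : H (o g (fun _ => m)).
    have := Hqs hm; rewrite {1}/m A10; exact: L5.
  have hmz : U (meet m z0) by rewrite /m -SLA SLI; exact: HU.
  have [h1 h2] := WD' (x := g) (w := fun _ => m) (v := fun _ => z0)
     (fun _ => HU hm) (fun _ => cls_eq hmz) (HU hmm).
  apply/PP_some; split => //; split => //.
  change (cls h0 = cls (o g (fun _ => z0))); rewrite ez0 -h2; apply: cls_eq; apply: HU; exact: Hms.
- move=> /PP_some [_ [hu e]].
  have : H (o g (fun _ => z0)).
    apply/(HclassH _ hh0)/cls_rel => //; by rewrite -e.
  move=> h; exact: (Hvu h).
Qed.

End Backward.

Theorem theorem4 (G : Type) (n : nat) (hn : 0 < n)
    (o : G -> ('I_n -> G) -> G) (meet : G -> G -> G) (R : 'I_n -> G -> G)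
    (hG : functional_Menger_meet_algebra o meet R)
    (H : G -> Prop) (hH : exists h, H h) :
  stabilizer o meet R H <->
  ((quasi_stable o H /\ meet_stable meet H /\ v_unitary o H) /\
   exists U : G -> Prop,
     (forall x, H x -> U x) /\
     (forall i x, U x -> H (R i x)) /\
     (forall i x, ~ U x -> ~ U (R i x)) /\
     (forall x y, U x -> H y -> H (o y (Rv R x))) /\
     (forall x y, U x -> U y -> U (o y (Rv R x)))).
Proof.
split; first exact: forward.
case: hH => h0 hh0.
move=> [[hqs [hms hvu]] [U [hU [hRH [hRU [hC1 hC2]]]]]].
case: hG => [[A1 [A2 [A3 [A4 [A5 [A6 A7]]]]]] [SLA SLC SLI] A8 A9 A10].
exact: (@stab_ok G n o meet R H U hn A1 A3 A4 A6 A7 SLA SLC SLI A8 A9 A10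
          hqs hms hvu hU hRH hRU hC1 hC2 (inhabits h0) h0 hh0).
Qed.
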